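(* Let $f:\mathbb{Z}^n\to\mathbb{R}\cup\{+\infty\}$ be a function satisfying condition (SSQM$^\natural$) with $\arg\min f\neq\emptyset$. Then Algorithm BasicSteepestDescent applied to $f$ finds a minimizer of $f$ in a finite number of iterations.
   Context: $N=\{1,\dots,n\}$. For $i\in N$, $\chi_i\in\{0,1\}^n$ is the characteristic vector of $i$, and $\chi_0=0$. $\mathrm{dom}\,f=\{x\in\mathbb{Z}^n\mid f(x)<+\infty\}$. For $x,y\in\mathbb{Z}^n$, $\mathrm{supp}^+(x-y)=\{i\in N\mid x(i)>y(i)\}$ and $\mathrm{supp}^-(x-y)=\{j\in N\mid x(j)<y(j)\}$. Condition (SSQM$^\natural$): for all $x,y\in\mathrm{dom}\,f$ and all $i\in\mathrm{supp}^+(x-y)$ there exists $j\in\mathrm{supp}^-(x-y)\cup\{0\}$ such that at least one of the following holds: (a) $f(x-\chi_i+\chi_j)<f(x)$; (b) $f(y+\chi_i-\chi_j)<f(y)$; (c) $f(x-\chi_i+\chi_j)=f(x)$ and $f(y+\chi_i-\chi_j)=f(y)$. Algorithm BasicSteepestDescent: Step 0: choose an arbitrary $x_0\in\mathrm{dom}\,f$ and set $x:=x_0$. Step 1: if $f(x-\chi_i+\chi_j)\ge f(x)$ for every $i,j\in N\cup\{0\}$, output $x$ and stop. Step 2: find $i,j\in N\cup\{0\}$ minimizing $f(x-\chi_i+\chi_j)$. Step 3: set $x:=x-\chi_i+\chi_j$ and go to Step 1. *)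

(* Defs.v *)
From HB Require Import structures.
From mathcomp Require Import all_boot all_order all_algebra.
From mathcomp Require Import reals constructive_ereal.
From Stdlib Require Import Relations.
Set Implicit Arguments. Unset Strict Implicit. Unset Printing Implicit Defensive.
Import Order.TTheory GRing.Theory Num.Theory.
Local Open Scope ring_scope.
Local Open Scope ereal_scope.

Definition zvec (n : nat) := 'I_n -> int.

(* characteristic vector chi_i for i in N u {0}; None encodes the index 0, chi_0 = 0 *)
Definition chi (n : nat) (i : option 'I_n) : zvec n :=
  fun k => if i is Some i' then ((k == i')%:R)%R else 0%R.

Definition exch (n : nat) (x : zvec n) (i j : option 'I_n) : zvec n :=
  fun k => (x k - chi i k + chi j k)%R.

Definition in_dom (R : realType) (n : nat) (f : zvec n -> \bar R) (x : zvec n) : Prop :=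
  f x < +oo.

Definition SSQMnat (R : realType) (n : nat) (f : zvec n -> \bar R) : Prop :=
  forall x y : zvec n, in_dom f x -> in_dom f y ->
  forall i : 'I_n, (y i < x i)%R ->
  exists j : option 'I_n,
    (match j with None => True | Some j' => (x j' < y j')%R end) /\
    [\/ f (exch x (Some i) j) < f x,
        f (exch y j (Some i)) < f y
      | f (exch x (Some i) j) = f x /\ f (exch y j (Some i)) = f y].

Definition is_minimizer (R : realType) (n : nat) (f : zvec n -> \bar R) (x : zvec n) : Prop :=
  forall y, f x <= f y.

Definition bsd_stop (R : realType) (n : nat) (f : zvec n -> \bar R) (x : zvec n) : Prop :=
  forall i j : option 'I_n, f x <= f (exch x i j).

(* Ties in Step 2 are resolved arbitrarily (the relation allows every choice). *)
Definition bsd_step (R : realType) (n : nat) (f : zvec n -> \bar R) (x x' : zvec n) : Prop :=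
  ~ bsd_stop f x /\
  exists i j : option 'I_n,
    x' = exch x i j /\ forall i' j' : option 'I_n, f (exch x i j) <= f (exch x i' j').

(* Main.v *)
Require Import Defs.
From HB Require Import structures.
From mathcomp Require Import all_boot all_order all_algebra.
From mathcomp Require Import reals constructive_ereal.
From Stdlib Require Import Relations.
From mathcomp Require Import zify ring.
From Stdlib Require Import Classical FunctionalExtensionality.
Import Order.TTheory GRing.Theory Num.Theory.
Set Implicit Arguments. Unset Strict Implicit.
Local Open Scope ring_scope.


Definition NN n (w : zvec n) : nat := (\sum_(t < n) absz (w t))%N.
Definition dist n (x y : zvec n) : nat := NN (fun t => x t - y t).

Lemma chi01 n (p : option 'I_n) t : chi p t = 0 \/ (chi p t = 1 /\ p = Some t).
Proof.
case: p => [a|]; last by left.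
rewrite /chi /=; case: (t =P a) => [->|ne]; first by right.
by left.
Qed.

Lemma chiSS n (a : 'I_n) : chi (Some a) a = 1.
Proof. by rewrite /chi /= eqxx. Qed.

Lemma chi0 n (p : option 'I_n) t : p <> Some t -> chi p t = 0.
Proof. by case: (chi01 p t) => [//|[_ /[swap] h /h]]. Qed.

Lemma exch_at n (x : zvec n) i j t : i <> Some t -> j <> Some t -> exch x i j t = x t.
Proof. by move=> hi hj; rewrite /exch chi0 // chi0 // subr0 addr0. Qed.

Lemma exch_atS n (x : zvec n) a j : j <> Some a -> exch x (Some a) j a = x a - 1.
Proof. by move=> hj; rewrite /exch chiSS chi0 // addr0. Qed.

Lemma exch_atT n (x : zvec n) i c : i <> Some c -> exch x i (Some c) c = x c + 1.
Proof. by move=> hi; rewrite /exch chiSS chi0 // subr0. Qed.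

Lemma exch_id n (x : zvec n) i : exch x i i = x.
Proof. by apply: functional_extensionality => t; rewrite /exch subrK. Qed.

Lemma exch_c1 n (x : zvec n) i j k : exch (exch x i j) k i = exch x k j.
Proof. apply: functional_extensionality => t; rewrite /exch; ring. Qed.

Lemma exch_c2 n (x : zvec n) i j k : exch (exch x i j) j k = exch x i k.
Proof. apply: functional_extensionality => t; rewrite /exch; ring. Qed.

Lemma sum_lt n (F G : 'I_n -> nat) a : (forall t, F t <= G t)%N -> (F a < G a)%N ->
  (\sum_t F t < \sum_t G t)%N.
Proof.
move=> h ha; rewrite (bigD1 a) //= [X in (_ < X)%N](bigD1 a) //=.
by rewrite -addSn leq_add //; apply: leq_sum => t _; exact: h.
Qed.

Lemma improve n (w v : zvec n) (p q : option 'I_n) :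
  (forall t, v t = w t + chi p t - chi q t) ->
  (forall a, p = Some a -> w a < 0) -> (forall b, q = Some b -> 0 < w b) ->
  (NN v <= NN w)%N /\ (p <> None \/ q <> None -> (NN v < NN w)%N).
Proof.
move=> hv hp hq.
have pw t : (absz (v t) <= absz (w t))%N.
  rewrite hv; case: (chi01 p t) => [->|[-> /hp h1]];
  case: (chi01 q t) => [->|[-> /hq h2]]; lia.
split; first by apply: leq_sum => t _; exact: pw.
have strict t : p = Some t \/ q = Some t -> (absz (v t) < absz (w t))%N.
  move=> hpq; rewrite hv.
  case: (chi01 p t) => [e1|[e1 ep]]; case: (chi01 q t) => [e2|[e2 eq]];
    rewrite ?e1 ?e2.
  - by case: hpq => h; [move: e1; rewrite /chi h eqxx | move: e2; rewrite /chi h eqxx];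
       move/eqP; rewrite oner_eq0.
  - have := hq _ eq; lia.
  - have := hp _ ep; lia.
  - have := hp _ ep; have := hq _ eq; lia.
move: pw; case: p hp hv strict => [a|] hp hv strict pw.
  by move=> _; apply: (sum_lt (a := a)) => //; apply: strict; left.
case: q hq hv strict pw => [b|] hq hv strict pw; last by case.
by move=> _; apply: (sum_lt (a := b)) => //; apply: strict; right.
Qed.

Lemma big2 n (F : 'I_n -> nat) a b : a != b ->
  (\sum_i F i = F a + F b + \sum_(i | (i != a) && (i != b)) F i)%N.
Proof.
move=> ab; rewrite (bigD1 a) //= (bigD1 b) /=; last by rewrite eq_sym.
by rewrite addnA.
Qed.

Lemma swap_le n (w v : zvec n) a b : a != b ->
  (forall t, v t = w t + chi (Some a) t - chi (Some b) t) ->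
  (absz (w a + 1)%R + absz (w b - 1)%R <= absz (w a) + absz (w b))%N -> (NN v <= NN w)%N.
Proof.
move=> ab hv h.
have ba : b != a by rewrite eq_sym.
rewrite /NN !(big2 _ ab); apply: leq_add.
  rewrite !hv chiSS (chi0 (p := Some b)); last by case=> e; move: ab; rewrite e eqxx.
  rewrite chiSS (chi0 (p := Some a)); last by case=> e; move: ab; rewrite e eqxx.
  by rewrite subr0 addr0.
apply: leq_sum => t /andP [ta tb]; rewrite hv !chi0 ?subr0 ?addr0 //.
  by case=> e; move: tb; rewrite e eqxx.
by case=> e; move: ta; rewrite e eqxx.
Qed.

Local Open Scope ereal_scope.



Definition steep (R : realType) n (f : zvec n -> \bar R) x i j :=
  f (exch x i j) < f x /\ forall i' j', f (exch x i j) <= f (exch x i' j').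

Lemma min_dom (R : realType) n (f : zvec n -> \bar R) x y :
  in_dom f x -> is_minimizer f y -> in_dom f y.
Proof. rewrite /in_dom => hx hy; exact: le_lt_trans (hy x) hx. Qed.

Lemma steep_dom (R : realType) n (f : zvec n -> \bar R) x i j :
  in_dom f x -> steep f x i j -> in_dom f (exch x i j).
Proof. move=> hx [h _]; exact: lt_trans h hx. Qed.

Lemma steep_neq (R : realType) n (f : zvec n -> \bar R) x i j :
  steep f x i j -> i <> j.
Proof. by move=> [h _] e; move: h; rewrite e exch_id ltxx. Qed.

Lemma L2 (R : realType) n (f : zvec n -> \bar R) (hf : SSQMnat f) x i j y a :
  in_dom f x -> steep f x i j -> is_minimizer f y -> i = Some a ->
  (exch x i j a < y a)%R ->
  exists k, [/\ k <> j, k <> Some a, (forall b, k = Some b -> (y b < exch x i j b)%R),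
    is_minimizer f (exch y (Some a) k) & f (exch x k j) = f (exch x i j)].
Proof.
move=> hx hst hy ei ha; subst i.
have hx' := steep_dom hx hst; have hyd := min_dom hx hy.
have [k [hk H]] := hf y _ hyd hx' a ha.
case: H => [h|h|[h1 h2]].
- by move: h; rewrite ltNge hy.
- by move: h; rewrite exch_c1 ltNge hst.2.
rewrite exch_c1 in h2.
exists k; split => //.
- by move=> e; move: h2 hst.1; rewrite e exch_id => ->; rewrite ltxx.
- by move=> e; move: hk; rewrite e /= => h; move: ha; rewrite ltNge (ltW h).
- by move=> b e; move: hk; rewrite e.
- by move=> z; rewrite h1; exact: hy.
Qed.

Lemma L3 (R : realType) n (f : zvec n -> \bar R) (hf : SSQMnat f) x i j y c :
  in_dom f x -> steep f x i j -> is_minimizer f y -> j = Some c ->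
  (y c < exch x i j c)%R ->
  exists k, [/\ k <> i, k <> Some c, (forall b, k = Some b -> (exch x i j b < y b)%R),
    is_minimizer f (exch y k (Some c)) & f (exch x i k) = f (exch x i j)].
Proof.
move=> hx hst hy ej ha; subst j.
have hx' := steep_dom hx hst; have hyd := min_dom hx hy.
have [k [hk H]] := hf _ y hx' hyd c ha.
case: H => [h|h|[h1 h2]].
- by move: h; rewrite exch_c2 ltNge hst.2.
- by move: h; rewrite ltNge hy.
rewrite exch_c2 in h1.
exists k; split => //.
- by move=> e; move: h1 hst.1; rewrite e exch_id => ->; rewrite ltxx.
- by move=> e; move: hk; rewrite e /= => h; move: ha; rewrite ltNge (ltW h).
- by move=> b e; move: hk; rewrite e.
- by move=> z; rewrite h2; exact: hy.
Qed.




Lemma caseGG (R : realType) n (f : zvec n -> \bar R) (x : zvec n) i j (y : zvec n) :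
  steep f x i j ->
  (forall a, i = Some a -> (y a < x a)%R) -> (forall c, j = Some c -> (x c < y c)%R) ->
  (dist (exch x i j) y < dist x y)%N.
Proof.
move=> hst hi hj.
have [_ ] := improve (w := fun t => (x t - y t)%R) (v := fun t => (exch x i j t - y t)%R)
   (p := j) (q := i) (fun t => ltac:(rewrite /exch; ring))
   (fun a e => ltac:(have := hj a e; lia)) (fun a e => ltac:(have := hi a e; lia)).
apply; have ne := steep_neq hst; clear -ne; case: j ne => [c|] ne; first by left.
by right.
Qed.

Lemma caseBG (R : realType) n (f : zvec n -> \bar R) (hf : SSQMnat f) (x : zvec n) i j (y : zvec n) a :
  in_dom f x -> steep f x i j -> is_minimizer f y -> i = Some a -> (x a <= y a)%R ->
  (forall c, j = Some c -> (x c < y c)%R) ->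
  exists z, is_minimizer f z /\ (dist (exch x i j) z < dist x y)%N.
Proof.
move=> hx hst hy ei ha hj; subst i.
have nij := steep_neq hst.
have xa : exch x (Some a) j a = (x a - 1)%R by apply: exch_atS => e; apply: nij.
have H : (exch x (Some a) j a < y a)%R by rewrite xa; lia.
have [k [kj ka kb km _]] := L2 hf hx hst hy erefl H.
have hq : forall b, k = Some b -> (0 < x b - y b)%R.
  move=> b e; have := kb b e.
  rewrite exch_at; first lia.
    by case=> eb; subst b; move: H; rewrite ltNge => /negP; apply; apply: ltW; apply: kb.
  by move=> ej; apply: kj; rewrite e ej.
exists (exch y (Some a) k); split => //.
have [_ ] := improve (w := fun t => (x t - y t)%R)
   (v := fun t => (exch x (Some a) j t - exch y (Some a) k t)%R)
   (p := j) (q := k) (fun t => ltac:(rewrite /exch; ring))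
   (fun c e => ltac:(have := hj c e; lia)) hq.
apply; clear -kj; case: j kj => [c|] kj; first by left.
by right.
Qed.

Lemma caseGB (R : realType) n (f : zvec n -> \bar R) (hf : SSQMnat f) (x : zvec n) i j (y : zvec n) c :
  in_dom f x -> steep f x i j -> is_minimizer f y ->
  (forall a, i = Some a -> (y a < x a)%R) -> j = Some c -> (y c <= x c)%R ->
  exists z, is_minimizer f z /\ (dist (exch x i j) z < dist x y)%N.
Proof.
move=> hx hst hy hi ej hc; subst j.
have nij := steep_neq hst.
have xc : exch x i (Some c) c = (x c + 1)%R by apply: exch_atT.
have H : (y c < exch x i (Some c) c)%R by rewrite xc; lia.
have [k [ki kc kb km _]] := L3 hf hx hst hy erefl H.
have hp : forall b, k = Some b -> (x b - y b < 0)%R.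
  move=> b e; have := kb b e.
  rewrite exch_at; first lia.
    by move=> eb; apply: ki; rewrite e eb.
  by move=> eb; apply: kc; rewrite e eb.
exists (exch y k (Some c)); split => //.
have [_ ] := improve (w := fun t => (x t - y t)%R)
   (v := fun t => (exch x i (Some c) t - exch y k (Some c) t)%R)
   (p := k) (q := i) (fun t => ltac:(rewrite /exch; ring))
   hp (fun a e => ltac:(have := hi a e; lia)).
apply; clear -ki; case: k ki => [b|] ki; first by left.
by right => e; apply: ki.
Qed.




Lemma dec_opt n (i : option 'I_n) (P Q : 'I_n -> Prop) : (forall a, P a \/ Q a) ->
  (forall a, i = Some a -> P a) \/ exists a, i = Some a /\ Q a.
Proof.
move=> h; case: i => [a|]; last by left.
by case: (h a) => H; [left => b [<-] | right; exists a].
Qed.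

Lemma key (R : realType) n (f : zvec n -> \bar R) (hf : SSQMnat f) (x : zvec n) i j :
  in_dom f x -> steep f x i j -> forall d (y : zvec n), (dist x y < d)%N -> is_minimizer f y ->
  exists z, is_minimizer f z /\ (dist (exch x i j) z < dist x y)%N.
Proof.
move=> hx hst d; elim: d => [//|d IH] y hd hy.
have [gi|[a [ei ha]]] := dec_opt i (P := fun a => (y a < x a)%R) (Q := fun a => (x a <= y a)%R)
  (fun a => ltac:(simpl; lia)).
all: have [gj|[c [ej hc]]] := dec_opt j (P := fun a => (x a < y a)%R) (Q := fun a => (y a <= x a)%R)
  (fun a => ltac:(simpl; lia)).
- by exists y; split => //; exact: (caseGG hst gi gj).
- by have H := caseGB hf hx hst hy gi ej hc; exact H.
- by have H := caseBG hf hx hst hy ei ha gj; exact H.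
subst i j.
have nac : a != c by apply/eqP => e; apply: (steep_neq hst); rewrite e.
have nca : c != a by rewrite eq_sym.
have x'a : exch x (Some a) (Some c) a = (x a - 1)%R
  by apply: exch_atS; case => e; move: nca; rewrite e eqxx.
have x'c : exch x (Some a) (Some c) c = (x c + 1)%R
  by apply: exch_atT; case => e; move: nac; rewrite e eqxx.
have Ha : (exch x (Some a) (Some c) a < y a)%R by rewrite x'a; lia.
have Hc : (y c < exch x (Some a) (Some c) c)%R by rewrite x'c; lia.
have [lta|eqa] : (x a < y a)%R \/ x a = y a by lia.
  have [k [kj ka kb km _]] := L2 hf hx hst hy erefl Ha.
  have hq : forall b, k = Some b -> (0 < x b - y b)%R.
    move=> b e; have := kb b e.
    rewrite exch_at; first lia.
      by case=> eb; subst b; move: Ha; rewrite ltNge => /negP; apply; apply: ltW; apply: kb.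
    by move=> ej; apply: kj; rewrite e ej.
  have hpa : forall b, Some a = Some b -> (x b - y b < 0)%R by move=> b [<-]; lia.
  have [_ lt1] := improve (w := fun t => (x t - y t)%R)
    (v := fun t => (x t - exch y (Some a) k t)%R)
    (p := Some a) (q := k) (fun t => ltac:(rewrite /exch; ring)) hpa hq.
  have lt2 : (dist x (exch y (Some a) k) < dist x y)%N by apply: lt1; left.
  have [z [hz1 hz2]] := IH (exch y (Some a) k) (leq_trans lt2 hd) km.
  by exists z; split => //; apply: ltn_trans hz2 lt2.
have [ltc|eqc] : (y c < x c)%R \/ x c = y c by lia.
  have [k [ki kc kb km _]] := L3 hf hx hst hy erefl Hc.
  have hp : forall b, k = Some b -> (x b - y b < 0)%R.
    move=> b e; have := kb b e.
    rewrite exch_at; first lia.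
      by move=> eb; apply: ki; rewrite e eb.
    by move=> eb; apply: kc; rewrite e eb.
  have hqc : forall b, Some c = Some b -> (0 < x b - y b)%R by move=> b [<-]; lia.
  have [_ lt1] := improve (w := fun t => (x t - y t)%R)
    (v := fun t => (x t - exch y k (Some c) t)%R)
    (p := k) (q := Some c) (fun t => ltac:(rewrite /exch; ring)) hp hqc.
  have lt2 : (dist x (exch y k (Some c)) < dist x y)%N by apply: lt1; right.
  have [z [hz1 hz2]] := IH (exch y k (Some c)) (leq_trans lt2 hd) km.
  by exists z; split => //; apply: ltn_trans hz2 lt2.
have sub : forall b, b != a -> b != c -> (y b < x b)%R ->
    is_minimizer f (exch y (Some a) (Some b)) ->
    exists z, is_minimizer f z /\ (dist (exch x (Some a) (Some c)) z < dist x y)%N.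
  move=> b ba bc yb hm.
  have ab : a != b by rewrite eq_sym.
  have le1 := swap_le (w := fun t => (x t - y t)%R)
    (v := fun t => (x t - exch y (Some a) (Some b) t)%R) ab
    (fun t => ltac:(rewrite /exch; ring)) ltac:(lia).
  have [z [hz1 hz2]] := caseGB hf hx hst hm (y := exch y (Some a) (Some b)) (c := c)
    (fun a' e => ltac:(case: e => <-; rewrite exch_atS; [lia| by case=> e; move: ba; rewrite e eqxx]))
    erefl ltac:(rewrite exch_at; [lia| by case=> e; move: nac; rewrite e eqxx
                                    | by case=> e; move: bc; rewrite e eqxx]).
  by exists z; split => //; apply: leq_trans hz2 le1.
have [k [kj ka kb km kf]] := L2 hf hx hst hy erefl Ha.
case: k kj ka kb km kf => [b|] kj ka kb km kf.
  apply: (sub b) => //.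
  - by apply/eqP => e; apply: ka; rewrite e.
  - by apply/eqP => e; apply: kj; rewrite e.
  - have := kb b erefl; rewrite exch_at //.
      by case=> e; apply: ka; rewrite e.
    by case=> e; apply: kj; rewrite e.
have [k' [ki kc kb' km' kf']] := L3 hf hx hst hy erefl Hc.
case: k' ki kc kb' km' kf' => [b'|] ki kc kb' km' kf'.
  have b'c : b' != c by apply/eqP => e; apply: kc; rewrite e.
  have b'a : b' != a by apply/eqP => e; apply: ki; rewrite e.
  have xb' : (x b' < y b')%R.
    have := kb' b' erefl; rewrite exch_at //.
      by case=> e; move: b'a; rewrite e eqxx.
    by case=> e; move: b'c; rewrite e eqxx.
  have le1 := swap_le (w := fun t => (x t - y t)%R)
    (v := fun t => (x t - exch y (Some b') (Some c) t)%R) b'c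
    (fun t => ltac:(rewrite /exch; ring)) ltac:(lia).
  have [z [hz1 hz2]] := caseBG hf hx hst km' (y := exch y (Some b') (Some c)) (a := a)
    erefl ltac:(rewrite exch_at; [lia| by case=> e; move: b'a; rewrite e eqxx
                                    | by case=> e; move: nca; rewrite e eqxx])
    (fun c' e => ltac:(case: e => <-; rewrite exch_atT; [lia| by case=> e; move: b'c; rewrite e eqxx])).
  by exists z; split => //; apply: leq_trans hz2 le1.
have hst2 : steep f x (Some a) None.
  split; first by rewrite kf'; exact: hst.1.
  by move=> i' j'; rewrite kf'; exact: hst.2.
have Ha2 : (exch x (Some a) None a < y a)%R by rewrite exch_atS //; lia.
have [k4 [k4j k4a kb4 km4 _]] := L2 hf hx hst2 hy erefl Ha2.
case: k4 k4j k4a kb4 km4 => [b|] k4j k4a kb4 km4; last by [].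
have ba : b != a by apply/eqP => e; apply: k4a; rewrite e.
have yb : (y b < x b)%R.
  by have := kb4 b erefl; rewrite exch_at // => e; case: e => e; move: ba; rewrite e eqxx.
apply: (sub b) => //.
by apply/eqP => e; move: yb; rewrite e eqc ltxx.
Qed.




Lemma glob (R : realType) n (f : zvec n -> \bar R) (hf : SSQMnat f) (x : zvec n) :
  in_dom f x -> bsd_stop f x -> forall d (y : zvec n), (dist x y < d)%N ->
  is_minimizer f y -> f x <= f y.
Proof.
move=> hx hs d; elim: d => [//|d IH] y hd hy.
have hyd := min_dom hx hy.
have [[t ht]|hne] := classic (exists t, x t <> y t); last first.
  have -> : x = y; last by [].
  apply: functional_extensionality => t; apply: NNPP => h; apply: hne; by exists t.
have [h|h] : (y t < x t)%R \/ (x t < y t)%R by lia.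
  have [j [hj H]] := hf x y hx hyd t h.
  case: H => [h1|h1|[h1 h2]].
  - by move: h1; rewrite ltNge hs.
  - by move: h1; rewrite ltNge hy.
  have hp : forall b, j = Some b -> (x b - y b < 0)%R.
    by move=> b e; move: hj; rewrite e /=; lia.
  have hq : forall b, Some t = Some b -> (0 < x b - y b)%R by move=> b [<-]; lia.
  have [_ lt1] := improve (w := fun t => (x t - y t)%R)
    (v := fun s => (x s - exch y j (Some t) s)%R)
    (p := j) (q := Some t) (fun t => ltac:(rewrite /exch; ring)) hp hq.
  have lt2 : (dist x (exch y j (Some t)) < dist x y)%N by apply: lt1; right.
  have hm : is_minimizer f (exch y j (Some t)) by move=> z; rewrite h2; exact: hy.
  by rewrite -h2; apply: IH hm; apply: leq_trans lt2 hd.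
have [j [hj H]] := hf y x hyd hx t h.
case: H => [h1|h1|[h1 h2]].
- by move: h1; rewrite ltNge hy.
- by move: h1; rewrite ltNge hs.
have hq : forall b, j = Some b -> (0 < x b - y b)%R.
  by move=> b e; move: hj; rewrite e /=; lia.
have hp : forall b, Some t = Some b -> (x b - y b < 0)%R by move=> b [<-]; lia.
have [_ lt1] := improve (w := fun t => (x t - y t)%R)
  (v := fun s => (x s - exch y (Some t) j s)%R)
  (p := Some t) (q := j) (fun t => ltac:(rewrite /exch; ring)) hp hq.
have lt2 : (dist x (exch y (Some t) j) < dist x y)%N by apply: lt1; left.
have hm : is_minimizer f (exch y (Some t) j) by move=> z; rewrite h1; exact: hy.
by rewrite -h1; apply: IH hm; apply: leq_trans lt2 hd.
Qed.

Lemma step_steep (R : realType) n (f : zvec n -> \bar R) (x x' : zvec n) :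
  bsd_step f x x' -> exists i j, x' = exch x i j /\ steep f x i j.
Proof.
move=> [ns [i [j [e hm]]]]; exists i, j; split => //; split => //.
have [i' [j' h']] : exists i' j', f (exch x i' j') < f x.
  apply: NNPP => H; apply: ns => i' j'; rewrite leNgt; apply/negP => h.
  by apply: H; exists i', j'.
exact: le_lt_trans (hm i' j') h'.
Qed.

Lemma crt_le (R : realType) n (f : zvec n -> \bar R) (x0 x : zvec n) :
  clos_refl_trans (zvec n) (bsd_step f) x0 x -> f x <= f x0.
Proof.
elim => [a b hab| a | a b c _ h1 _ h2].
- have [i [j [-> [h _]]]] := step_steep hab; exact: ltW.
- by [].
- exact: le_trans h2 h1.
Qed.

Unset Implicit Arguments. Set Strict Implicit.



Theorem corollary2p5 (R : realType) (n : nat) (f : zvec n -> \bar R)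
  (f_noninf : forall x, f x != -oo)
  (hf : SSQMnat f)
  (hmin : exists x, is_minimizer f x)
  (x0 : zvec n) (hx0 : in_dom f x0) :
  (* every run from x0 halts after finitely many iterations ... *)
  (~ exists s : nat -> zvec n, s 0%N = x0 /\ forall k, bsd_step f (s k) (s k.+1)) /\
  (* ... and whatever it outputs is a minimizer of f *)
  (forall x, clos_refl_trans (zvec n) (bsd_step f) x0 x -> bsd_stop f x -> is_minimizer f x).
Proof.
have [y0 hy0] := hmin.
split.
  move=> [s [s0 hs]].
  have dom : forall k, in_dom f (s k).
    elim => [|k IH]; first by rewrite s0.
    have [i [j [-> [h _]]]] := step_steep (hs k); exact: lt_trans h IH.
  have cl : forall k, exists z, is_minimizer f z /\ (dist (s k) z + k <= dist x0 y0)%N.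
    elim => [|k [z [hz hle]]]; first by exists y0; rewrite s0 addn0.
    have [i [j [e hst]]] := step_steep (hs k).
    have [z' [hz' lt]] := key hf (dom k) hst (ltnSn (dist (s k) z)) hz.
    by exists z'; split => //; rewrite e; lia.
  have [z [_ hle]] := cl (dist x0 y0).+1; lia.
move=> x hc hs.
have hx : in_dom f x by exact: le_lt_trans (crt_le hc) hx0.
have h := glob hf hx hs (ltnSn (dist x y0)) hy0.
by move=> z; exact: le_trans h (hy0 z).
Qed.
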